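(* The following identities hold in $Y[[u^{-1}]]$: (1) $t_{1,1}(u-1)t_{1,2}(u)=t_{1,2}(u-1)t_{1,1}(u)$; (2) $t_{1,1}(u)t_{2,1}(u-1)=t_{2,1}(u)t_{1,1}(u-1)$; (3) $t_{1,2}(u-1)t_{1,2}(u)=0$; (4) $(k+1)t_{2,1}(u)t_{1,1}(u-k)=k\,t_{1,1}(u-k)t_{2,1}(u)+t_{2,1}(u-k)t_{1,1}(u)$ for every $k\in\mathbb{Z}_{\ge0}$.
   Context: Let $k$ be an algebraically closed field of characteristic $p>2$ (the integer $k$ in (4) is a separate variable). Fix parities $|1|=0$, $|2|=1$. The super Yangian $Y=Y_{1|1}$ is the associative superalgebra over $k$ generated by $t_{i,j}^{(r)}$ ($1\le i,j\le2$, $r>0$) of parity $|i|+|j|\pmod2$, with relations $[t_{i,j}^{(r)},t_{k,l}^{(s)}]=(-1)^{|i||j|+|i||k|+|j||k|}\sum_{t=0}^{\min(r,s)-1}(t_{k,j}^{(t)}t_{i,l}^{(r+s-1-t)}-t_{k,j}^{(r+s-1-t)}t_{i,l}^{(t)})$ (supercommutator), $t_{i,j}^{(0)}=\delta_{ij}$. Put $t_{i,j}(u)=\sum_{r\ge0}t_{i,j}^{(r)}u^{-r}$; shifted series $t_{i,j}(u-c)$ are expanded in $u^{-1}$. *)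

(* Defs.v *)
From HB Require Import structures.
From mathcomp Require Import all_boot all_order all_algebra.
Set Implicit Arguments. Unset Strict Implicit. Unset Printing Implicit Defensive.
Import Order.TTheory GRing.Theory Num.Theory.
Local Open Scope ring_scope.

(* Indices {1,2} of the paper are encoded as 'I_2: paper index 1 = i1 = ord0,
   paper index 2 = i2 = ord_max. Parity |1| = 0, |2| = 1. *)
Definition i1 : 'I_2 := ord0.
Definition i2 : 'I_2 := ord_max.
Definition par (i : 'I_2) : nat := nat_of_ord i.

(* A family t i j r (= t_{i,j}^{(r)}) in a F-algebra A satisfying the defining
   relations of the super Yangian Y_{1|1}:  t^{(0)}_{ij} = delta_ij and, for r,s>0,
   the supercommutator relation (generator t_{ij}^{(r)} has parity |i|+|j|). *)
Definition yangian_rel (F : fieldType) (A : algType F)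
    (t : 'I_2 -> 'I_2 -> nat -> A) : Prop :=
  (forall i j, t i j 0%N = (i == j)%:R) /\
  (forall (i j k l : 'I_2) (r s : nat), (0 < r)%N -> (0 < s)%N ->
     t i j r * t k l s
       - ((-1) ^+ ((par i + par j) * (par k + par l))%N : A) * (t k l s * t i j r)
     = ((-1) ^+ (par i * par j + par i * par k + par j * par k)%N : A) *
       \sum_(q < minn r s)
         (t k j q * t i l (r + s - 1 - q)%N - t k j (r + s - 1 - q)%N * t i l q)).

(* Formal power series in u^{-1} with coefficients in A: the coefficient of
   u^{-n} is f n.  Product = Cauchy product. *)
Definition sermul (F : fieldType) (A : algType F) (f g : nat -> A) : nat -> A :=
  fun n => \sum_(m < n.+1) f m * g (n - m)%N.

(* Coefficient of u^{-n} in the expansion of (u - c)^{-r} in u^{-1}: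
   (u-c)^{-r} = sum_{m>=0} C(r+m-1, m) c^m u^{-r-m}  (r >= 1), and (u-c)^0 = 1. *)
Definition invpow_coef (F : fieldType) (c : F) (r n : nat) : F :=
  if r == 0%N then (n == 0%N)%:R
  else if (r <= n)%N then ('C(n.-1, r.-1))%:R * c ^+ (n - r)
  else 0.

(* t_{i,j}(u - c) = sum_{r>=0} t_{i,j}^{(r)} (u-c)^{-r}, expanded in u^{-1}. *)
Definition tser (F : fieldType) (A : algType F) (t : 'I_2 -> 'I_2 -> nat -> A)
    (i j : 'I_2) (c : F) : nat -> A :=
  fun n => \sum_(r < n.+1) invpow_coef c r n *: t i j r.

(* Main.v *)
Require Import Defs.
From HB Require Import structures.
From mathcomp Require Import all_boot all_order all_algebra.
Import GRing.Theory.
Local Open Scope ring_scope.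
Lemma w_rec (F : fieldType) (c : F) s m :
  invpow_coef c s.+1 m.+1 = c * invpow_coef c s.+1 m + invpow_coef c s m.
Proof.
rewrite /invpow_coef /=.
case: s => [|s] /=.
  case: m => [|m] /=.
    by rewrite bin0 subnn expr0 mulr1 mulr0 add0r.
  by rewrite !bin0 !mul1r !subn1 /= exprS addr0.
case: m => [|M]; first by rewrite mulr0 addr0.
rewrite !ltnS.
case: (ltngtP s M) => hsm /=.
- rewrite binS natrD mulrDl !subSS.
  have -> : (M - s = (M - s.+1).+1)%N by rewrite subnSK.
  rewrite exprS mulrCA; congr (_ + _).
- by rewrite mulr0 addr0.
- subst M. rewrite !subSS subnn !binn !expr0 mulr0 add0r.
  by [].
Qed.

Lemma w_lt (F : fieldType) (c : F) s m : (m < s)%N -> invpow_coef c s m = 0.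
Proof.
rewrite /invpow_coef => hms; case: s hms => [//|s] hms /=.
by rewrite leqNgt hms.
Qed.

Definition phi (F : fieldType) (A : algType F) (c : F) (g : nat -> nat -> A) r m : A :=
  \sum_(s < m.+1) invpow_coef c s m *: g r s.

Arguments phi {F A} c g r m.
Definition Sv (F : fieldType) (A : algType F) (c : F) (g : nat -> nat -> A) n : A :=
  \sum_(r < n.+1) phi c g r (n - r).
Arguments Sv {F A} c g n.

Lemma sum_recl (V : zmodType) m (f : nat -> V) :
  \sum_(i < m.+1) f i = f 0%N + \sum_(i < m) f i.+1.
Proof. by rewrite big_ord_recl. Qed.
Lemma sum_recr (V : zmodType) m (f : nat -> V) :
  \sum_(i < m.+1) f i = \sum_(i < m) f i + f m.
Proof. by rewrite big_ord_recr. Qed.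

Lemma phi_shift (F : fieldType) (A : algType F) (c : F) (g : nat -> nat -> A) r m :
  g r 0%N = 0 ->
  phi c (fun r s => g r s.+1) r m = phi c g r m.+1 - c *: phi c g r m.
Proof.
move=> g0.
have e1 : phi c g r m = \sum_(s < m.+1) invpow_coef c s.+1 m *: g r s.+1.
  rewrite /phi (sum_recl _ _ (fun s => invpow_coef c s m *: g r s)) g0 scaler0 add0r.
  rewrite (sum_recr _ _ (fun s => invpow_coef c s.+1 m *: g r s.+1)) w_lt //.
  by rewrite scale0r addr0.
rewrite e1 /phi (sum_recl _ _ (fun s => invpow_coef c s m.+1 *: g r s)) g0 scaler0 add0r.
rewrite scaler_sumr -sumrB; apply: eq_bigr => i _.
by rewrite scalerA -scalerBl w_rec addrC addKr.
Qed.

Lemma phi_sub (F : fieldType) (A : algType F) (c : F) (f g : nat -> nat -> A) r m :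
  phi c (fun r s => f r s - g r s) r m = phi c f r m - phi c g r m.
Proof. by rewrite /phi -sumrB; apply: eq_bigr => i _; rewrite scalerBr. Qed.

Lemma phi_ext (F : fieldType) (A : algType F) (c : F) (f g : nat -> nat -> A) r m :
  (forall r s, f r s = g r s) -> phi c f r m = phi c g r m.
Proof. by move=> e; apply: eq_bigr => i _; rewrite e. Qed.

Lemma Sv_ext (F : fieldType) (A : algType F) (c : F) (f g : nat -> nat -> A) n :
  (forall r s, f r s = g r s) -> Sv c f n = Sv c g n.
Proof. by move=> e; apply: eq_bigr => i _; apply: phi_ext. Qed.

Lemma Sv_sub (F : fieldType) (A : algType F) (c : F) (f g : nat -> nat -> A) n :
  Sv c (fun r s => f r s - g r s) n = Sv c f n - Sv c g n.
Proof. by rewrite /Sv -sumrB; apply: eq_bigr => i _; rewrite phi_sub. Qed.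

Lemma keyL (F : fieldType) (A : algType F) (c : F) (g : nat -> nat -> A) n :
  (forall s, g 0%N s = 0) -> (forall r, g r 0%N = 0) ->
  Sv c (fun r s => g r.+1 s - g r s.+1) n = c *: Sv c g n.
Proof.
move=> g0s gr0.
rewrite /Sv.
have E : forall r : 'I_n.+1, phi c (fun r s => g r.+1 s - g r s.+1) r (n - r)
   = (phi c g r.+1 (n - r) - phi c g r (n - r).+1) + c *: phi c g r (n - r).
  move=> r; rewrite phi_sub (phi_shift _ _ c g r (n - r) (gr0 r)).
  by rewrite opprB addrA addrAC.
rewrite (eq_bigr _ (fun r _ => E r)) big_split /= scaler_sumr.
rewrite -[RHS]add0r; congr (_ + _).
have E2 : forall r : 'I_n.+1, phi c g r.+1 (n - r) - phi c g r (n - r).+1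
   = (fun k => phi c g k (n.+1 - k)) r.+1 - (fun k => phi c g k (n.+1 - k)) r.
  by move=> r /=; rewrite subSS subSn // -ltnS.
rewrite (eq_bigr _ (fun r _ => E2 r)).
rewrite -(big_mkord xpredT (fun k => (fun k => phi c g k (n.+1 - k)) k.+1 - (fun k => phi c g k (n.+1 - k)) k)).
rewrite telescope_sumr // /= subnn subn0.
rewrite /phi big_ord_recl big_ord0 /= gr0 scaler0 addr0.
rewrite big1 ?subrr // => i _; by rewrite g0s scaler0.
Qed.

Lemma tser0 (F : fieldType) (A : algType F) (t : 'I_2 -> 'I_2 -> nat -> A) i j m :
  tser t i j 0 m = t i j m.
Proof.
rewrite /tser (sum_recr _ _ (fun r => invpow_coef 0 r m *: t i j r)).
rewrite big1 ?add0r.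
  rewrite /invpow_coef; case: m => [|m] /=; first by rewrite scale1r.
  by rewrite leqnn subnn expr0 binn mulr1 scale1r.
move=> r _; rewrite /invpow_coef.
case: (nat_of_ord r =P 0%N) => [->|/eqP rn0] /=.
  by rewrite eqn0Ngt (leq_ltn_trans _ (ltn_ord r)) // scale0r.
rewrite (ltnW (ltn_ord r)) expr0n /= subn_eq0 leqNgt ltn_ord /=.
by rewrite mulr0 scale0r.
Qed.

Lemma SR (F : fieldType) (A : algType F) (t : 'I_2 -> 'I_2 -> nat -> A) i j k l c n :
  sermul (tser t i j 0) (tser t k l c) n
  = Sv c (fun r s => t i j r * t k l s) n.
Proof.
rewrite /sermul /Sv; apply: eq_bigr => m _.
by rewrite tser0 /tser /phi mulr_sumr; apply: eq_bigr => s _; rewrite scalerAr.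
Qed.

Lemma SL (F : fieldType) (A : algType F) (t : 'I_2 -> 'I_2 -> nat -> A) i j k l c n :
  sermul (tser t k l c) (tser t i j 0) n
  = Sv c (fun r s => t k l s * t i j r) n.
Proof.
rewrite /sermul /Sv (reindex_inj rev_ord_inj) /=; apply: eq_bigr => m _.
rewrite subSS tser0 /tser /phi mulr_suml subKn; last by rewrite -ltnS.
by apply: eq_bigr => s _; rewrite scalerAl.
Qed.

Definition Csum (F : fieldType) (A : algType F) (X Y : nat -> A) r s : A :=
  \sum_(q < minn r s) (X q * Y (r + s - 1 - q)%N - X (r + s - 1 - q)%N * Y q).
Arguments Csum {F A} X Y r s.

Lemma Cdiff (F : fieldType) (A : algType F) (X Y : nat -> A) r s :
  Csum X Y r.+1 s - Csum X Y r s.+1 = X r * Y s - X s * Y r.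
Proof.
rewrite /Csum.
set T := fun q : nat => X q * Y (r + s - q)%N - X (r + s - q)%N * Y q.
rewrite (eq_bigr (fun q : 'I_(minn r.+1 s) => T q)); last first.
  by move=> q _; rewrite /T addSn subn1.
rewrite [X in _ - X](eq_bigr (fun q : 'I_(minn r s.+1) => T q)); last first.
  by move=> q _; rewrite /T addnS subn1.
case: (ltngtP r s) => hrs.
- rewrite (minn_idPl hrs) (minn_idPl (ltnW (leqW hrs))).
  rewrite (sum_recr _ _ T) addrC addKr /T addKn //.
- rewrite (minn_idPr (leqW (ltnW hrs))) (minn_idPr hrs).
  rewrite (sum_recr _ _ T) opprD addrA subrr add0r /T addnK opprB //.
- subst s; rewrite (minn_idPr (leqnSn r)) (minn_idPl (leqnSn r)) subrr //.
  by rewrite subrr.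
Qed.

Lemma grec (F : fieldType) (A : algType F) (t : 'I_2 -> 'I_2 -> nat -> A)
  (ht : yangian_rel t) (i j k l : 'I_2) (e s0 : A) :
  e = (-1) ^+ ((par i + par j) * (par k + par l))%N ->
  s0 = (-1) ^+ (par i * par j + par i * par k + par j * par k)%N ->
  (forall s, t i j 0%N * t k l s - e * (t k l s * t i j 0%N) = 0) ->
  (forall r, t i j r * t k l 0%N - e * (t k l 0%N * t i j r) = 0) ->
  forall r s,
   (t i j r.+1 * t k l s - e * (t k l s * t i j r.+1))
   - (t i j r * t k l s.+1 - e * (t k l s.+1 * t i j r))
   = s0 * (t k j r * t i l s - t k j s * t i l r).
Proof.
move=> -> -> h0 h1.
have full : forall r s, t i j r * t k l s
   - (-1) ^+ ((par i + par j) * (par k + par l))%N * (t k l s * t i j r)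
   = (-1) ^+ (par i * par j + par i * par k + par j * par k)%N * Csum (t k j) (t i l) r s.
  move=> r s; case: r => [|r].
    by rewrite h0 /Csum min0n big_ord0 mulr0.
  case: s => [|s].
    by rewrite h1 /Csum minn0 big_ord0 mulr0.
  by rewrite (proj2 ht).
move=> r s; by rewrite !full -mulrBr Cdiff.
Qed.

Lemma case1 (F : fieldType) (A : algType F) (t : 'I_2 -> 'I_2 -> nat -> A)
  (ht : yangian_rel t) n :
  sermul (tser t i1 i1 1) (tser t i1 i2 0) n
             = sermul (tser t i1 i2 1) (tser t i1 i1 0) n.
Proof.
have h0 := proj1 ht.
pose g r s := t i1 i1 r * t i1 i2 s - 1 * (t i1 i2 s * t i1 i1 r).
have g0s : forall s, g 0%N s = 0 by move=> s; rewrite /g h0 /= mul1r mulr1 mul1r subrr.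
have gr0 : forall r, g r 0%N = 0 by move=> r; rewrite /g h0 /= mulr0 mul0r mulr0 subrr.
have gr := grec _ _ t ht i1 i1 i1 i2 1 1 erefl erefl g0s gr0.
have K := keyL _ _ 1 g n g0s gr0.
rewrite (Sv_ext _ _ _ _ (fun r s => t i1 i1 r * t i1 i2 s - t i1 i1 s * t i1 i2 r)) in K; last first.
  by move=> r s; rewrite /g gr mul1r.
rewrite (Sv_sub _ _ 1 (fun r s => t i1 i1 r * t i1 i2 s) (fun r s => t i1 i1 s * t i1 i2 r)) in K.
rewrite scale1r (Sv_ext _ _ 1 g (fun r s => t i1 i1 r * t i1 i2 s - t i1 i2 s * t i1 i1 r)) in K; last first.
  by move=> r s; rewrite /g mul1r.
rewrite (Sv_sub _ _ 1 (fun r s => t i1 i1 r * t i1 i2 s) (fun r s => t i1 i2 s * t i1 i1 r)) in K.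
rewrite -(SL _ _ t i1 i2 i1 i1) -(SL _ _ t i1 i1 i1 i2) in K.
by apply: oppr_inj; apply: (addrI _); exact: K.
Qed.

Lemma case2 (F : fieldType) (A : algType F) (t : 'I_2 -> 'I_2 -> nat -> A)
  (ht : yangian_rel t) n :
  sermul (tser t i1 i1 0) (tser t i2 i1 1) n
             = sermul (tser t i2 i1 0) (tser t i1 i1 1) n.
Proof.
have h0 := proj1 ht.
pose g r s := t i1 i1 r * t i2 i1 s - 1 * (t i2 i1 s * t i1 i1 r).
have g0s : forall s, g 0%N s = 0 by move=> s; rewrite /g h0 /= mul1r mulr1 mul1r subrr.
have gr0 : forall r, g r 0%N = 0 by move=> r; rewrite /g h0 /= mulr0 mul0r mulr0 subrr.
have gr := grec _ _ t ht i1 i1 i2 i1 1 1 erefl erefl g0s gr0.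
have K := keyL _ _ 1 g n g0s gr0.
rewrite (Sv_ext _ _ _ _ (fun r s => t i2 i1 r * t i1 i1 s - t i2 i1 s * t i1 i1 r)) in K; last first.
  by move=> r s; rewrite /g gr mul1r.
rewrite (Sv_sub _ _ 1 (fun r s => t i2 i1 r * t i1 i1 s) (fun r s => t i2 i1 s * t i1 i1 r)) in K.
rewrite scale1r (Sv_ext _ _ 1 g (fun r s => t i1 i1 r * t i2 i1 s - t i2 i1 s * t i1 i1 r)) in K; last first.
  by move=> r s; rewrite /g mul1r.
rewrite (Sv_sub _ _ 1 (fun r s => t i1 i1 r * t i2 i1 s) (fun r s => t i2 i1 s * t i1 i1 r)) in K.
rewrite (SR _ _ t i1 i1 i2 i1) (SR _ _ t i2 i1 i1 i1).
by symmetry; apply: (addIr _); exact: K.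
Qed.

Lemma case4 (F : fieldType) (A : algType F) (t : 'I_2 -> 'I_2 -> nat -> A)
  (ht : yangian_rel t) (k : nat) n :
     (k.+1)%:R * sermul (tser t i2 i1 0) (tser t i1 i1 k%:R) n
     = k%:R * sermul (tser t i1 i1 k%:R) (tser t i2 i1 0) n
       + sermul (tser t i2 i1 k%:R) (tser t i1 i1 0) n.
Proof.
have h0 := proj1 ht.
pose g r s := t i1 i1 r * t i2 i1 s - 1 * (t i2 i1 s * t i1 i1 r).
have g0s : forall s, g 0%N s = 0 by move=> s; rewrite /g h0 /= mul1r mulr1 mul1r subrr.
have gr0 : forall r, g r 0%N = 0 by move=> r; rewrite /g h0 /= mulr0 mul0r mulr0 subrr.
have gr := grec _ _ t ht i1 i1 i2 i1 1 1 erefl erefl g0s gr0.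
pose g' r s := g s r.
have K := keyL _ _ k%:R g' n gr0 g0s.
rewrite (Sv_ext _ _ _ _ (fun r s => t i2 i1 r * t i1 i1 s - t i2 i1 s * t i1 i1 r)) in K; last first.
  move=> r s; rewrite /g' -opprB (gr s r) mul1r opprB //.
rewrite (Sv_sub _ _ _ (fun r s => t i2 i1 r * t i1 i1 s) (fun r s => t i2 i1 s * t i1 i1 r)) in K.
rewrite (Sv_ext _ _ _ g' (fun r s => t i1 i1 s * t i2 i1 r - t i2 i1 r * t i1 i1 s)) in K; last first.
  by move=> r s; rewrite /g' /g mul1r.
rewrite (Sv_sub _ _ _ (fun r s => t i1 i1 s * t i2 i1 r) (fun r s => t i2 i1 r * t i1 i1 s)) in K.
rewrite -(SR _ _ t i2 i1 i1 i1) -(SL _ _ t i1 i1 i2 i1) -(SL _ _ t i2 i1 i1 i1) in K.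
move: K.
set X := sermul (tser t i2 i1 0) (tser t i1 i1 k%:R) n.
set Y := sermul (tser t i1 i1 k%:R) (tser t i2 i1 0) n.
set W := sermul (tser t i2 i1 k%:R) (tser t i1 i1 0) n.
move=> K.
have -> : W = X - k%:R *: (Y - X) by rewrite -K opprB addrC subrK.
rewrite scaler_nat !mulr_natl mulrnBl opprB mulrS.
by rewrite addrCA [Y *+ k + _]addrC subrK.
Qed.

Lemma Sv_mull (F : fieldType) (A : algType F) (c : F) (e : A) (h : nat -> nat -> A) n :
  Sv c (fun r s => e * h r s) n = e * Sv c h n.
Proof.
rewrite /Sv mulr_sumr; apply: eq_bigr => r _.
rewrite /phi mulr_sumr; apply: eq_bigr => s _; by rewrite scalerAr.
Qed.

Lemma case3 (F : fieldType) (A : algType F) (t : 'I_2 -> 'I_2 -> nat -> A)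
  (ht : yangian_rel t) (h2 : (2%:R : F) != 0) n :
  sermul (tser t i1 i2 1) (tser t i1 i2 0) n = 0.
Proof.
have h0 := proj1 ht.
pose g r s := t i1 i2 r * t i1 i2 s - (-1) * (t i1 i2 s * t i1 i2 r).
have g0s : forall s, g 0%N s = 0 by move=> s; rewrite /g h0 /= !(mulr0, mul0r) subrr.
have gr0 : forall r, g r 0%N = 0 by move=> r; rewrite /g h0 /= !(mulr0, mul0r) subrr.
have gr := grec _ _ t ht i1 i2 i1 i2 (-1) 1 erefl erefl g0s gr0.
have K := keyL _ _ 1 g n g0s gr0.
rewrite (Sv_ext _ _ _ _ (fun r s => t i1 i2 r * t i1 i2 s - t i1 i2 s * t i1 i2 r)) in K; last first.
  by move=> r s; rewrite /g gr mul1r.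
rewrite (Sv_sub _ _ 1 (fun r s => t i1 i2 r * t i1 i2 s) (fun r s => t i1 i2 s * t i1 i2 r)) in K.
rewrite scale1r (Sv_sub _ _ 1 (fun r s => t i1 i2 r * t i1 i2 s) (fun r s => (-1) * (t i1 i2 s * t i1 i2 r))) in K.
rewrite (Sv_mull _ _ 1 (-1) (fun r s => t i1 i2 s * t i1 i2 r)) in K.
rewrite -(SL _ _ t i1 i2 i1 i2) in K.
move: K; set Q := sermul _ _ n => K.
have KQ : Q = - Q.
  by have := oppr_inj (addrI _ K); rewrite mulN1r.
have Q2 : (2%:R : F) *: Q = 0 by rewrite scaler_nat mulr2n {1}KQ addNr.
have := congr1 (fun x => (2%:R : F)^-1 *: x) Q2.
by rewrite /= scalerA mulVf // scale1r scaler0.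
Qed.

Theorem lemmaA1 (F : closedFieldType) (p : nat) (hp : prime p) (hp2 : (2 < p)%N)
    (hchar : p \in [pchar F])
    (A : algType F) (t : 'I_2 -> 'I_2 -> nat -> A) (ht : yangian_rel t) :
  (* (1) t11(u-1) t12(u) = t12(u-1) t11(u) *)
  (forall n, sermul (tser t i1 i1 1) (tser t i1 i2 0) n
             = sermul (tser t i1 i2 1) (tser t i1 i1 0) n) /\
  (* (2) t11(u) t21(u-1) = t21(u) t11(u-1) *)
  (forall n, sermul (tser t i1 i1 0) (tser t i2 i1 1) n
             = sermul (tser t i2 i1 0) (tser t i1 i1 1) n) /\
  (* (3) t12(u-1) t12(u) = 0 *)
  (forall n, sermul (tser t i1 i2 1) (tser t i1 i2 0) n = 0) /\
  (* (4) (k+1) t21(u) t11(u-k) = k t11(u-k) t21(u) + t21(u-k) t11(u) *)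
  (forall (k : nat) n,
     (k.+1)%:R * sermul (tser t i2 i1 0) (tser t i1 i1 k%:R) n
     = k%:R * sermul (tser t i1 i1 k%:R) (tser t i2 i1 0) n
       + sermul (tser t i2 i1 k%:R) (tser t i1 i1 0) n).
Proof.
have h2 : (2%:R : F) != 0.
  by rewrite -(dvdn_pcharf hchar) gtnNdvd.
split; first exact: case1.
split; first exact: case2.
split; first exact: case3.
exact: case4.
Qed.
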